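(* Let $(X,d)$ be a metric space and let $U\subseteq F_{USCB}(X)$. Then $U$ is totally bounded in $(F_{USCB}(X),H_{\rm send})$ if and only if $U(0)=\bigcup_{u\in U}[u]_0$ is totally bounded in $X$.
   Context: A fuzzy set on $X$ is a function $u:X\to[0,1]$, with $\alpha$-cuts $[u]_\alpha=\{x: u(x)\ge\alpha\}$ for $\alpha\in(0,1]$ and $[u]_0=\overline{\{u>0\}}$. $F_{USC}(X)$ is the set of fuzzy sets with all $\alpha$-cuts ($\alpha\in[0,1]$) non-empty and closed; $F_{USCB}(X)=\{u\in F_{USC}(X): [u]_0\text{ is compact}\}$. $X\times[0,1]$ is metrized by $\overline{d}((x,\alpha),(y,\beta))=d(x,y)+|\alpha-\beta|$; ${\rm send}\,u=\{(x,t)\in X\times[0,1]: u(x)\ge t\}\cap([u]_0\times[0,1])$; $H_{\rm send}(u,v)=H({\rm send}\,u,{\rm send}\,v)$ where $H$ is the Hausdorff distance $H(A,B)=\max\{\sup_{a\in A}\inf_{b\in B}\overline{d}(a,b),\sup_{b\in B}\inf_{a\in A}\overline{d}(a,b)\}$. *)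

(* Defs.v *)
From HB Require Import structures.
From mathcomp Require Import all_boot all_order all_algebra.
From mathcomp Require Import all_classical all_reals all_analysis.
Set Implicit Arguments. Unset Strict Implicit. Unset Printing Implicit Defensive.
Import Order.TTheory GRing.Theory Num.Theory.
Local Open Scope classical_set_scope.
Local Open Scope ring_scope.

Section Fuzzy.
Context {R : realType} {X : metricType R}.

Definition fuzzy_valued (u : X -> R) := forall x, 0 <= u x <= 1.

Definition cut (u : X -> R) (a : R) : set X :=
  if a == 0 then closure [set x | 0 < u x] else [set x | a <= u x].

Definition F_USC : set (X -> R) :=
  [set u | fuzzy_valued u /\
     forall a : R, 0 <= a <= 1 -> cut u a !=set0 /\ closed (cut u a)].

Definition F_USCB : set (X -> R) :=
  [set u | F_USC u /\ compact (cut u 0)].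

Definition dbar (p q : X * R) : R := mdist p.1 q.1 + `|p.2 - q.2|.

Definition send (u : X -> R) : set (X * R) :=
  [set p | [/\ 0 <= p.2 <= 1, p.2 <= u p.1 & cut u 0 p.1]].

Definition hausdorff (A B : set (X * R)) : \bar R :=
  maxe (ereal_sup [set ereal_inf [set (dbar a b)%:E | b in B] | a in A])
       (ereal_sup [set ereal_inf [set (dbar a b)%:E | a in A] | b in B]).

Definition H_send (u v : X -> R) : \bar R := hausdorff (send u) (send v).

Definition totally_bounded_Hsend (U : set (X -> R)) :=
  forall eps : R, 0 < eps -> exists S : set (X -> R),
    [/\ finite_set S, S `<=` F_USCB &
        forall u, U u -> exists2 v, S v & (H_send u v < eps%:E)%E].

Definition totally_bounded_X (A : set X) :=
  forall eps : R, 0 < eps -> exists S : set X,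
    finite_set S /\ forall x, A x -> exists2 y, S y & mdist x y < eps.

Definition U0 (U : set (X -> R)) : set X := \bigcup_(u in U) cut u 0.

End Fuzzy.

(* Main.v *)
Require Import Defs.
From HB Require Import structures.
From mathcomp Require Import all_boot all_order all_algebra.
From mathcomp Require Import all_classical all_reals all_analysis.
From mathcomp Require Import lra.
Set Implicit Arguments. Unset Strict Implicit. Unset Printing Implicit Defensive.
Import Order.TTheory GRing.Theory Num.Theory.
Local Open Scope classical_set_scope.
Local Open Scope ring_scope.
Local Notation cut := Defs.cut.

Section Helpers.
Context {R : realType} {X : metricType R}.

Lemma haus_lt (A B : set (X * R)) (r : R) a :
  (hausdorff A B < r%:E)%E -> A a -> exists2 b, B b & dbar a b < r.
Proof.
move=> Hr Aa.
have : (ereal_inf [set (dbar a b)%:E | b in B] < r%:E)%E.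
  apply: le_lt_trans Hr; rewrite le_max; apply/orP; left.
  by apply: ereal_sup_ubound; exists a.
by move=> /ereal_inf_lt [_ [b Bb <-]]; rewrite lte_fin => ?; exists b.
Qed.

Lemma haus_le (A B : set (X * R)) (r : R) :
  (forall a, A a -> exists2 b, B b & dbar a b <= r) ->
  (forall b, B b -> exists2 a, A a & dbar a b <= r) ->
  (hausdorff A B <= r%:E)%E.
Proof.
move=> HA HB; rewrite /hausdorff ge_max; apply/andP; split;
  apply: ge_ereal_sup => _ [a Aa <-]; apply: ge_ereal_inf.
  by have [b Bb ab] := HA _ Aa; exists (dbar a b)%:E; [exists b|rewrite lee_fin].
by have [b Bb ab] := HB _ Aa; exists (dbar b a)%:E; [exists b|rewrite lee_fin].
Qed.

Lemma finite_closedX (A : set X) : finite_set A -> closed A.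
Proof.
by move=> fA; apply: compact_closed; [exact: metric_hausdorff|exact: finite_compact].
Qed.

Lemma compact_net (K : set X) d : compact K -> 0 < d ->
  exists N : set X, finite_set N /\ forall x, K x -> exists2 y, N y & mdist x y < d.
Proof.
move=> cK d0; apply: contrapT => Hn.
pose B (N : set X) := K `\` \bigcup_(y in N) ball y d.
have FF : Filter (filter_from finite_set B).
  apply: filter_from_filter; first by exists set0; exact: finite_set0.
  move=> i j fi fj; exists (i `|` j); first by rewrite finite_setU.
  move=> x [Kx nx]; split; split => // -[y iy yb]; apply: nx; exists y => //.
    by left.
  by right.
have PF : ProperFilter (filter_from finite_set B).
  apply: filter_from_proper => // N fN; apply/set0P/negP => /eqP B0.
  apply: Hn; exists N; split => // x Kx.
  apply: contrapT => nx.
  have : B N x.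
    split => // -[y Ny]; rewrite ballEmdist /= metric_sym => h.
    by apply: nx; exists y.
  by rewrite B0.
have FK : filter_from finite_set B K.
  by exists set0; [exact: finite_set0|move=> x []].
have [p [Kp clp]] := cK _ PF FK.
have FBp : filter_from finite_set B (B [set p]).
  by exists [set p]; [exact: finite_set1|].
have [z [[Kz nz] bz]] := clp (B [set p]) (ball p d) FBp (nbhsx_ballx p d d0).
by apply: nz; exists p.
Qed.

Lemma FUSCB_of (v : X -> R) :
  (forall x, 0 <= v x <= 1) -> finite_set [set x | 0 < v x] ->
  (exists x, v x = 1) -> F_USCB v.
Proof.
move=> v01 fin [x1 vx1].
have c0 : cut v 0 = [set x | 0 < v x].
  rewrite /cut eqxx.
  by have := iffLR (closure_id [set x | 0 < v x]) (finite_closedX fin) => <-.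
split; last by rewrite c0; exact: finite_compact.
split=> // a /andP[a0 a1].
have [->|an0] := eqVneq a 0; first by rewrite c0; split; [exists x1; rewrite /= vx1|exact: finite_closedX].
rewrite /cut (negbTE an0); split; first by exists x1; rewrite /= vx1.
apply: finite_closedX; apply: sub_finite_set fin => x /=.
by apply: lt_le_trans; rewrite lt_neqAle eq_sym an0.
Qed.

End Helpers.



Section Dir1.
Context {R : realType} {X : metricType R}.

Lemma dir1 (U : set (X -> R)) : U `<=` F_USCB ->
  totally_bounded_Hsend U -> totally_bounded_X (U0 U).
Proof.
move=> UF TB eps e0.
have e20 : 0 < eps / 2 by rewrite divr_gt0.
have [S [fS SF Snet]] := TB _ e20.
have : forall v, exists N : set X, S v -> finite_set N /\
    forall x, cut v 0 x -> exists2 y, N y & mdist x y < eps / 2.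
  move=> v; have [Sv|nSv] := pselect (S v); last by exists set0.
  have [N HN] := compact_net (SF _ Sv).2 e20; by exists N.
move=> /choice [NN HNN].
exists (\bigcup_(v in S) NN v); split.
  by apply: bigcup_finite => // v Sv; have [] := HNN v Sv.
move=> x [u Uu xu].
have [v Sv Huv] := Snet _ Uu.
have sx : send u (x, 0).
  split => //=; first by rewrite lexx ler01.
  by have [[/(_ x) /andP[]]] := UF _ Uu.
have [[y t] [/= _ _ yv] dxy] := haus_lt Huv sx.
have [_ HN] := HNN v Sv.
have [z Nz dyz] := HN _ yv.
exists z; first by exists v.
rewrite /dbar /= in dxy.
have := metric_triangle x y z.
have : 0 <= `|0 - t| by [].
move=> h1 h2; apply: (le_lt_trans h2).
rewrite [eps]splitr ltrD //; apply: le_lt_trans dxy; rewrite lerDl //.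
Qed.

End Dir1.



Lemma bigmax_att (I : finType) (P : pred I) (F : I -> nat) :
  (0 < \max_(i | P i) F i)%N -> exists2 i, P i & \max_(i | P i) F i = F i.
Proof.
case: (pickP P) => [i Pi|P0]; last by rewrite big_pred0.
move=> _.
have [|j Pj ->] := @eq_bigmax_cond I P F; first by apply/card_gt0P; exists i.
by exists j.
Qed.

Section Dir2.
Context {R : realType} {X : metricType R}.
Variables (s : seq X) (x0 : X) (m : nat) (d : R).

Definition C (u : X -> R) (y : X) (k : nat) : Prop :=
  exists x, [/\ cut u 0 x, mdist x y < d & (k.-1)%:R / m%:R <= u x].
Definition idx u y := (\max_(k < m.+1 | (0 < k)%N && `[< C u y k >]) k)%N.
Definition fu u : {ffun 'I_(size s) -> 'I_m.+1} :=
  [ffun i : 'I_(size s) => inord (idx u (nth x0 s i))].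
Definition W (f : {ffun 'I_(size s) -> 'I_m.+1}) y :=
  (\max_(i < size s | nth x0 s i == y) f i)%N.
Definition w f y : R := (W f y)%:R / m%:R.

Lemma idx_le u y : (idx u y <= m)%N.
Proof. by apply/bigmax_leqP => k _; rewrite -ltnS. Qed.

Lemma W_le f y : (W f y <= m)%N.
Proof. by apply/bigmax_leqP => i _; rewrite -ltnS. Qed.

Lemma P1 u (i : 'I_(size s)) k : (0 < k)%N -> (k <= m)%N ->
  C u (nth x0 s i) k -> (k <= W (fu u) (nth x0 s i))%N.
Proof.
move=> k0 km Ck.
apply: (leq_trans _ (@leq_bigmax_cond _ (fun j : 'I_(size s) => nth x0 s j == nth x0 s i) (fun j : 'I_(size s) => nat_of_ord (fu u j)) i (eqxx _))).
rewrite ffunE inordK; last by rewrite ltnS idx_le.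
have km1 : (k < m.+1)%N by rewrite ltnS.
have := @leq_bigmax_cond _ (fun j : 'I_m.+1 => (0 < j)%N && `[< C u (nth x0 s i) j >])
   (fun j : 'I_m.+1 => nat_of_ord j) (Ordinal km1).
by apply; rewrite /= k0 /=; apply/asboolP.
Qed.

Lemma P2 u y : (0 < W (fu u) y)%N ->
  y \in s /\ exists k, [/\ (0 < k)%N, W (fu u) y = k & C u y k].
Proof.
move=> /[dup] W0 /bigmax_att [i /eqP iy Wi].
split; first by rewrite -iy mem_nth.
move: W0; rewrite /W Wi ffunE inordK; last by rewrite ltnS idx_le.
rewrite -iy => /[dup] I0 /bigmax_att [k /andP[k0 /asboolP Ck] Ik].
by exists k; split => //; rewrite /W Wi ffunE inordK ?ltnS ?idx_le // -iy.
Qed.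

End Dir2.



Section Dir2b.
Context {R : realType} {X : metricType R}.
Variables (s : seq X) (x0 : X) (m : nat) (d : R).
Hypothesis m0 : (0 < m)%N.

Definition net (u : X -> R) := forall x, cut u 0 x -> exists2 y, y \in s & mdist x y < d.

Lemma cut0E (v : X -> R) : finite_set [set x | 0 < v x] -> cut v 0 = [set x | 0 < v x].
Proof.
move=> fin; rewrite /cut eqxx.
by have := iffLR (closure_id [set x | 0 < v x]) (finite_closedX fin) => <-.
Qed.

Let v u := w x0 (fu s x0 m d u).

Lemma w_ge0 u y : 0 <= v u y.
Proof. by rewrite /v /w divr_ge0. Qed.

Lemma w_le1 u y : v u y <= 1.
Proof.
have m0R : (0:R) < m%:R by rewrite ltr0n.
by rewrite /v /w ler_pdivrMr // mul1r ler_nat W_le.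
Qed.

Lemma w_pos u y : 0 < v u y -> y \in s /\
  exists k, [/\ (0 < k)%N, W x0 (fu s x0 m d u) y = k & C m d u y k].
Proof.
have m0R : (0:R) < m%:R by rewrite ltr0n.
by rewrite /v /w pmulr_lgt0 ?invr_gt0 // ltr0n => /P2.
Qed.

Lemma w_fin u : finite_set [set y | 0 < v u y].
Proof. by apply: sub_finite_set (finite_seq s) => y /w_pos []. Qed.

Lemma w_P1 u x y k : cut u 0 x -> y \in s -> mdist x y < d ->
  (0 < k)%N -> (k <= m)%N -> (k.-1)%:R / m%:R <= u x -> k%:R / m%:R <= v u y.
Proof.
move=> xu ys dxy k0 km hk.
have m0R : (0:R) < m%:R by rewrite ltr0n.
pose i := Ordinal (elimT idP (eqbRL (index_mem y s) ys)).
have iy : nth x0 s i = y by rewrite /= nth_index.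
have := @P1 _ _ s x0 m d u i k k0 km; rewrite iy => /(_ (ex_intro _ x (And3 xu dxy hk))).
by rewrite /v /w ler_pM2r ?invr_gt0 // ler_nat.
Qed.

Lemma w_FUSCB u : F_USCB u -> net u -> F_USCB (v u).
Proof.
move=> Fu Nu; have m0R : (0:R) < m%:R by rewrite ltr0n.
apply: FUSCB_of; first by move=> x; rewrite w_ge0 w_le1.
  exact: w_fin.
have [[x1 hx1] _] := Fu.1.2 1 (introT andP (conj (@ler01 R) (lexx (1:R)))).
rewrite /cut oner_eq0 /= in hx1.
have x1u : cut u 0 x1.
  by rewrite /cut eqxx; apply: subset_closure; rewrite /= (lt_le_trans ltr01 hx1).
have [y ys dy] := Nu _ x1u.
exists y; apply/eqP; rewrite eq_le w_le1 /=.
have := w_P1 x1u ys dy m0 (leqnn m).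
rewrite divff ?gt_eqF //; apply; apply: le_trans hx1.
by rewrite ler_pdivrMr // mul1r ler_nat leq_pred.
Qed.

Lemma w_haus u : F_USCB u -> net u ->
  (H_send u (v u) <= (d + m%:R^-1)%:E)%E.
Proof.
move=> Fu Nu; have m0R : (0:R) < m%:R by rewrite ltr0n.
have c0 : cut (v u) 0 = [set y | 0 < v u y] by apply: cut0E; exact: w_fin.
have u01 : forall x, 0 <= u x <= 1 by exact: Fu.1.1.
have im0 : (0:R) < m%:R^-1 by rewrite invr_gt0.
apply: haus_le.
- move=> [x t] [/= /andP[t0 t1] tu xu].
  have [y ys dxy] := Nu _ xu.
  pose j := Num.truncn (t * m%:R).
  pose k := minn j.+1 m.
  have k0 : (0 < k)%N by rewrite /k leq_min m0.
  have km : (k <= m)%N by rewrite /k geq_minr.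
  have tm0 : 0 <= t * m%:R by rewrite mulr_ge0.
  have hj : j%:R <= t * m%:R by rewrite /j truncn_le.
  have hj1 : t * m%:R < j.+1%:R by exact: truncnS_gt.
  have hk : (k.-1)%:R / m%:R <= u x.
    apply: le_trans tu; rewrite ler_pdivrMr //; apply: le_trans hj.
    rewrite ler_nat /k; case: (leqP j.+1 m) => hh /=.
      by [].
    by apply: leq_trans (leq_pred _) _; rewrite -ltnS.
  have tk : t <= k%:R / m%:R.
    rewrite ler_pdivlMr // /k; case: (leqP j.+1 m) => h.
      by rewrite ltW.
    by rewrite -[X in _ <= X]mul1r ler_pM2r.
  have vy := w_P1 xu ys dxy k0 km hk.
  exists (y, t).
    split => //=; first by rewrite t0 t1.
      exact: le_trans vy.
    rewrite c0 /=; apply: lt_le_trans vy.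
    by rewrite divr_gt0 // ltr0n.
  rewrite /dbar /= subrr normr0 addr0.
  by apply: ltW; apply: (lt_le_trans dxy); rewrite lerDl ltW.
- move=> [y t] [/= /andP[t0 t1] tv yv].
  rewrite c0 /= in yv.
  have [_ [k [k0 Wk [x [xu dxy hk]]]]] := w_pos yv.
  exists (x, Num.min t (u x)).
    split => //=.
      have /andP[ux0 ux1] := u01 x.
      by rewrite le_min t0 ux0 /= ge_min t1.
    by rewrite ge_min lexx orbT.
  rewrite /dbar /=; apply: lerD; first exact: ltW.
  have [h|h] := leP t (u x).
    by rewrite subrr normr0 ltW.
  rewrite distrC ger0_norm; last by rewrite subr_ge0 ltW.
  move: tv; rewrite /v /w Wk => tv.
  move: hk; case: k k0 Wk tv => // k' _ _ tv /= hk.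
  rewrite -natr1 mulrDl in tv.
  rewrite mul1r in tv.
  set a := k'%:R / m%:R in tv hk.
  lra.
Qed.

End Dir2b.



Lemma dir2 {R : realType} {X : metricType R} (U : set (X -> R)) : U `<=` F_USCB ->
  totally_bounded_X (U0 U) -> totally_bounded_Hsend U.
Proof.
move=> UF TB eps e0.
pose d := eps / 4.
have d0 : 0 < d by rewrite divr_gt0.
pose m := (Num.truncn (2 / eps)).+1.
have m0 : (0 < m)%N by [].
have m0R : (0:R) < m%:R by rewrite ltr0n.
have hm : m%:R^-1 < eps / 2.
  have h1 : 2 / eps < m%:R by exact: truncnS_gt.
  rewrite ltr_pdivrMr // in h1.
  rewrite ltr_pdivlMr // mulrC ltr_pdivrMr //.
  by rewrite mulrC.
have [N [fN HN]] := TB _ d0.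
have [s Ns] := (finite_seqP N).1 fN.
case: s Ns => [|x0 s'] Ns.
  exists set0; split; [exact: finite_set0|by []|].
  move=> u Uu; exfalso.
  have [[_ Hc] _] := UF _ Uu.
  have [[x xu] _] := Hc 0 (introT andP (conj (lexx (0:R)) (@ler01 R))).
  have [y] := HN x (ex_intro2 _ _ u Uu xu).
  by rewrite Ns.
set s := x0 :: s' in Ns.
pose S := [set w x0 f | f in [set f : {ffun 'I_(size s) -> 'I_m.+1} |
             F_USCB (w x0 f)]].
exists S; split.
- exact: finite_image.
- by move=> _ [f Ff <-].
- move=> u Uu.
  have Nu : net s d u.
    move=> x xu; have [y Ny dy] := HN x (ex_intro2 _ _ u Uu xu).
    by exists y => //; move: Ny; rewrite Ns.
  exists (w x0 (fu s x0 m d u)).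
    exists (fu s x0 m d u) => //; exact: (w_FUSCB x0 m0 (UF _ Uu) Nu).
  apply: le_lt_trans (w_haus x0 m0 (UF _ Uu) Nu) _.
  rewrite lte_fin /d; lra.
Qed.


Unset Implicit Arguments.

Theorem theorem5p12 (R : realType) (X : metricType R) (U : set (X -> R)) :
  U `<=` F_USCB ->
  (totally_bounded_Hsend U <-> totally_bounded_X (U0 U)).
Proof.
move=> UF; split; [exact: dir1 | exact: dir2].
Qed.
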